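(* (1) If $t\in\mathtt m$, then there exist an environment $\Gamma$ and a type $\sigma$ such that $\Gamma\vdash t:\sigma$ is derivable in $\cap J$. (2) If $t\in\mathtt m_{var}$, then for every type $\sigma$ there exists an environment $\Gamma$ such that $\Gamma\vdash t:\sigma$ is derivable in $\cap J$.
   Context: Terms $\mathtt T_J$: $t,u,r ::= x \mid \lambda x.t \mid t(u,y.r)$ ($y$ bound in $r$), up to $\alpha$-equivalence. The sets $\mathtt m_{var}$ and $\mathtt m$ are generated by $\mathtt m_{var} ::= x \mid \mathtt m_{var}(\mathtt m, y.\mathtt m_{var})$ and $\mathtt m ::= x \mid \lambda x.\mathtt m \mid \mathtt m_{var}(\mathtt m, y.\mathtt m)$. System $\cap J$: types $\sigma,\tau ::= \alpha \mid \mathcal M\to\sigma$, $\mathcal M=[\sigma_i]_{i\in I}$ a finite possibly empty multiset; $\sqcup$ multiset union; environments map variables to multisets, $\wedge$ pointwise union, $\Gamma;x:\mathcal M$ extension with $x\notin\mathrm{dom}\,\Gamma$. $\mathrm{ch}(\mathcal M)=\mathcal M$ if $\mathcal M\ne[\,]$, $\mathrm{ch}([\,])=[\tau]$ for an arbitrary $\tau$. Rules: (var) $x:[\sigma]\vdash x:\sigma$; (abs) from $\Gamma;x:\mathcal M\vdash t:\sigma$ infer $\Gamma\vdash\lambda x.t:\mathcal M\to\sigma$; (many) from $(\Gamma_i\vdash t:\sigma_i)_{i\in I}$, $I\ne\emptyset$, infer $\wedge_i\Gamma_i\vdash t:[\sigma_i]_{i\in I}$; (app) from $\Gamma\vdash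 t:\mathrm{ch}([\mathcal M_i\to\tau_i]_{i\in I})$, $\Delta\vdash u:\mathrm{ch}(\sqcup_i\mathcal M_i)$, $\Lambda;y:[\tau_i]_{i\in I}\vdash r:\sigma$ infer $\Gamma\wedge\Delta\wedge\Lambda\vdash t(u,y.r):\sigma$. *)

(* Defs.v *)
From Stdlib Require Import List Arith PeanoNat.
Import ListNotations.

Definition var := nat.

Inductive term : Type :=
| Var : var -> term
| Lam : var -> term -> term
| GApp : term -> term -> var -> term -> term.   (* GApp t u y r = t(u, y.r) *)

Inductive is_mvar : term -> Prop :=
| mvar_var : forall x, is_mvar (Var x)
| mvar_app : forall t u y r,
    is_mvar t -> is_m u -> is_mvar r -> is_mvar (GApp t u y r)
with is_m : term -> Prop :=
| m_var : forall x, is_m (Var x)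
| m_lam : forall x t, is_m t -> is_m (Lam x t)
| m_app : forall t u y r,
    is_mvar t -> is_m u -> is_m r -> is_m (GApp t u y r).

(* Types; multisets are represented by lists, considered up to the
   (deep) permutation equivalence teq / mteq below. *)
Inductive ty : Type :=
| TAtom : nat -> ty
| TArr : list ty -> ty -> ty.

Definition mset := list ty.

Inductive teq : ty -> ty -> Prop :=
| teq_atom : forall a, teq (TAtom a) (TAtom a)
| teq_arr : forall M N s t, mteq M N -> teq s t -> teq (TArr M s) (TArr N t)
with mteq : mset -> mset -> Prop :=
| mteq_nil : mteq [] []
| mteq_cons : forall a b M N1 N2,
    teq a b -> mteq M (N1 ++ N2) -> mteq (a :: M) (N1 ++ b :: N2).

(* Environments: total maps var -> multiset; dom Γ = {x | Γ x <> []}. *)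
Definition env := var -> mset.

Definition env_eq (G D : env) : Prop := forall x, mteq (G x) (D x).

Definition env_union (G D : env) : env := fun x => G x ++ D x.

(* Γ ; x : M  (used only when x ∉ dom Γ) *)
Definition env_ext (G : env) (x : var) (M : mset) : env :=
  fun z => if Nat.eqb z x then M else G z.

Definition env_single (x : var) (M : mset) : env :=
  fun z => if Nat.eqb z x then M else [].

Definition ch (M N : mset) : Prop :=
  (M <> [] /\ N = M) \/ (M = [] /\ exists tau, N = [tau]).

Inductive tyj : env -> term -> ty -> Prop :=
| ty_var : forall x s, tyj (env_single x [s]) (Var x) s
| ty_abs : forall G x M t s,
    G x = [] -> tyj (env_ext G x M) t s -> tyj G (Lam x t) (TArr M s)
| ty_app : forall (L : list (mset * ty)) G D Lam0 t u y r s A B,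
    ch (map (fun p => TArr (fst p) (snd p)) L) A ->
    mtyj G t A ->
    ch (concat (map fst L)) B ->
    mtyj D u B ->
    Lam0 y = [] ->
    tyj (env_ext Lam0 y (map snd L)) r s ->
    tyj (env_union (env_union G D) Lam0) (GApp t u y r) s
(* judgments are taken up to equality of multisets *)
| ty_eq : forall G G' t s s',
    tyj G t s -> env_eq G G' -> teq s s' -> tyj G' t s'
with mtyj : env -> term -> mset -> Prop :=
(* rule (many), with a nonempty index set I, presented by induction on I *)
| many_one : forall G t s, tyj G t s -> mtyj G t [s]
| many_cons : forall G D t s M,
    tyj G t s -> mtyj D t M -> mtyj (env_union G D) t (s :: M).

(* Main.v *)
Require Import Defs.
From Stdlib Require Import List Arith PeanoNat FunctionalExtensionality.
Import ListNotations.

Scheme is_m_mut := Induction for is_m Sort Prop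
with is_mvar_mut := Induction for is_mvar Sort Prop.

Lemma ext_self (G : env) x : env_ext (env_ext G x []) x (G x) = G.
Proof.
  apply functional_extensionality; intro z; unfold env_ext.
  destruct (Nat.eqb z x) eqn:E; auto. apply Nat.eqb_eq in E; subst; auto.
Qed.

Lemma mtyj_list (t : term) (l : list ty) :
  l <> [] -> (forall x, In x l -> exists G, tyj G t x) -> exists G, mtyj G t l.
Proof.
  induction l as [|a l IH]; intros Hn H; [congruence|].
  destruct (H a (or_introl eq_refl)) as [Ga Ha].
  destruct l as [|b l'].
  - exists Ga; constructor; auto.
  - destruct IH as [Gl Hl]; [discriminate| intros x Hx; apply H; right; auto|].
    exists (env_union Ga Gl); apply many_cons; auto.
Qed.

Definition choose (M : mset) (d : ty) : mset :=
  match M with [] => [d] | _ => M end.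

Lemma ch_choose M d : ch M (choose M d).
Proof. destruct M; unfold ch; simpl; [right; eauto | left; split; [discriminate|auto]]. Qed.

Lemma choose_ok (t : term) M d :
  (forall x, In x M -> exists G, tyj G t x) -> (exists G, tyj G t d) ->
  exists G, mtyj G t (choose M d).
Proof.
  intros H Hd; apply mtyj_list.
  - destruct M; simpl; discriminate.
  - destruct M; simpl; auto. intros x [<-|[]]; auto.
Qed.

Lemma app_lemma t u y r :
  (forall s, exists G, tyj G t s) -> (exists G su, tyj G u su) ->
  forall s Gr, tyj Gr r s -> exists G, tyj G (GApp t u y r) s.
Proof.
  intros Ht [Gu [su Hu]] s Gr Hr.
  set (L := map (fun tau => ([su], tau)) (Gr y)).
  set (A := choose (map (fun p => TArr (fst p) (snd p)) L) (TAtom 0)).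
  set (B := choose (concat (map fst L)) su).
  destruct (choose_ok t (map (fun p => TArr (fst p) (snd p)) L) (TAtom 0))
    as [G HG]; [intros; apply Ht | apply Ht |].
  destruct (choose_ok u (concat (map fst L)) su) as [D HD].
  { intros x Hx. exists Gu. unfold L in Hx. rewrite map_map in Hx. simpl in Hx.
    apply in_concat in Hx. destruct Hx as [l [Hl Hx]].
    apply in_map_iff in Hl. destruct Hl as [z [<- _]].
    destruct Hx as [<-|[]]; auto. }
  { eauto. }
  exists (env_union (env_union G D) (env_ext Gr y [])).
  eapply (ty_app L G D (env_ext Gr y []) t u y r s A B).
  - apply ch_choose.
  - exact HG.
  - apply ch_choose.
  - exact HD.
  - unfold env_ext; rewrite Nat.eqb_refl; auto.
  - assert (E : map snd L = Gr y).
    { unfold L; rewrite map_map; simpl; apply map_id. }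
    clear E. unfold L; rewrite map_map; simpl; rewrite map_id, ext_self; exact Hr.
Qed.

Theorem mainTheorem12 :
  (forall t : term, is_m t -> exists (G : env) (s : ty), tyj G t s) /\
  (forall t : term, is_mvar t -> forall s : ty, exists G : env, tyj G t s).
Proof.
  assert (H : forall t, is_m t -> exists (G : env) (s : ty), tyj G t s).
  { apply (is_m_mut (fun t _ => exists (G : env) (s : ty), tyj G t s)
                    (fun t _ => forall s : ty, exists G : env, tyj G t s)).
    - intros x; exists (env_single x [TAtom 0]), (TAtom 0); constructor.
    - intros x t _ [G [s Hs]]. exists (env_ext G x []), (TArr (G x) s).
      apply ty_abs. unfold env_ext; rewrite Nat.eqb_refl; auto.
      rewrite ext_self; auto.
    - intros t u y r _ Ht _ Hu _ [Gr [s Hr]].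
      destruct (app_lemma t u y r Ht Hu s Gr Hr) as [G HG]; eauto.
    - intros x s; exists (env_single x [s]); constructor.
    - intros t u y r _ Ht _ Hu _ Hr s.
      destruct (Hr s) as [Gr HGr]. eapply app_lemma; eauto. }
  assert (H2 : forall t, is_mvar t -> forall s : ty, exists G : env, tyj G t s).
  { apply (is_mvar_mut (fun t _ => exists (G : env) (s : ty), tyj G t s)
                    (fun t _ => forall s : ty, exists G : env, tyj G t s)).
    - intros x; exists (env_single x [TAtom 0]), (TAtom 0); constructor.
    - intros x t _ [G [s Hs]]. exists (env_ext G x []), (TArr (G x) s).
      apply ty_abs. unfold env_ext; rewrite Nat.eqb_refl; auto.
      rewrite ext_self; auto.
    - intros t u y r _ Ht _ Hu _ [Gr [s Hr]].
      destruct (app_lemma t u y r Ht Hu s Gr Hr) as [G HG]; eauto.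
    - intros x s; exists (env_single x [s]); constructor.
    - intros t u y r _ Ht _ Hu _ Hr s.
      destruct (Hr s) as [Gr HGr]. eapply app_lemma; eauto. }
  split; auto.
Qed.
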